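(* Let $\widehat K_5$ be the complete graph $K_5$ (vertices $w_1,\dots,w_5$) with a pendant vertex $v_i$ attached to each $w_i$, and let $S(\widehat K_5)$ be its full edge subdivision. Let $S(\widehat K_5)(A)$ and $S(\widehat K_5)(B)$ be obtained from $S(\widehat K_5)$ by identifying the (formerly pendant) degree-one vertices $v_1,\dots,v_5$ block-wise according to the $2$-partitions $A=\{2,3\}$ and $B=\{1,4\}$ of $5$ (blocks of sizes $2,3$, resp. $1,4$, each become one vertex; all edges kept). Then these two graphs, each with $22$ vertices, are non-isomorphic, and their standard Laplacians both have spectrum $$0,\ w_-,\ z_-^{(4)},\ \widehat w_-,\ 1^{(8)},\ \widehat w_+,\ z_+^{(4)},\ w_+,\ 2,$$ where $w_\pm=1\pm\frac12\sqrt{\frac{9+\sqrt{21}}{5}}$, $\widehat w_\pm=1\pm\frac12\sqrt{\frac{9-\sqrt{21}}{5}}$, $z_\pm=1\pm\sqrt{\frac25}$, and exponents $(m)$ denote multiplicities; in particular they are isospectral for the standard Laplacian (and, being bipartite, for the signless standard Laplacian).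
   Context: The edge subdivision of a graph $G$, denoted $S(G)$, replaces every edge $\{u,v\}$ by a new vertex $w$ and two edges $\{u,w\},\{w,v\}$. The standard Laplacian of a graph is $(\Delta_G f)(v)=f(v)-\frac{1}{\deg v}\sum_{u\in N_v}f(u)$ and the signless standard Laplacian is $(\Delta_{G^+}f)(v)=f(v)+\frac{1}{\deg v}\sum_{u\in N_v}f(u)$, where $N_v$ is the set of neighbours of $v$ and $\deg v=|N_v|$. *)

(* Defs.v *)
From HB Require Import structures.
From mathcomp Require Import all_boot all_order all_algebra.
Set Implicit Arguments. Unset Strict Implicit. Unset Printing Implicit Defensive.
Import Order.TTheory GRing.Theory Num.Theory.
Local Open Scope ring_scope.

Definition nbhd (T : finType) (adj : rel T) (v : T) : {set T} := [set u | adj v u].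
Definition deg (T : finType) (adj : rel T) (v : T) : nat := #|nbhd adj v|.

Definition stdLap (R : fieldType) (T : finType) (adj : rel T) : 'M[R]_#|T| :=
  \matrix_(i, j) ((i == j)%:R
     - (adj (enum_val i) (enum_val j))%:R / (deg adj (enum_val i))%:R).

Definition signlessLap (R : fieldType) (T : finType) (adj : rel T) : 'M[R]_#|T| :=
  \matrix_(i, j) ((i == j)%:R
     + (adj (enum_val i) (enum_val j))%:R / (deg adj (enum_val i))%:R).

Definition isomorphic (T1 T2 : finType) (adj1 : rel T1) (adj2 : rel T2) : Prop :=
  exists f : T1 -> T2, bijective f /\ forall x y, adj2 (f x) (f y) = adj1 x y.

(* Its vertices are
     - w_i                      (i : 'I_5),
     - m_{ij} for each K5-edge {w_i,w_j}, i<j (subdivision vertex),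
     - p_i for each pendant edge {w_i,v_i}   (subdivision vertex),
     - v_i.
   S(K5-hat)(P): identify the v_i according to a 2-partition of {0..4},
   encoded by a block map part : 'I_5 -> bool; the two blocks become the
   two vertices [vb false], [vb true]. *)

Definition K5edge := {p : 'I_5 * 'I_5 | (p.1 < p.2)%N}.

Definition SK5V : finType := (('I_5 + K5edge) + ('I_5 + bool))%type.

Definition wv (i : 'I_5) : SK5V := inl (inl i).
Definition mv (e : K5edge) : SK5V := inl (inr e).
Definition pv (i : 'I_5) : SK5V := inr (inl i).
Definition vb (b : bool) : SK5V := inr (inr b).

Definition SK5half (part : 'I_5 -> bool) (x y : SK5V) : bool :=
  match x, y with
  | inl (inl i), inl (inr e) => (i == (val e).1) || (i == (val e).2)  (* w_i - m_{ij} - w_j *)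
  | inl (inl i), inr (inl j) => i == j                              (* w_i - p_i *)
  | inr (inl j), inr (inr b) => part j == b                         (* p_j - [v_j] *)
  | _, _ => false
  end.

Definition SK5adj (part : 'I_5 -> bool) : rel SK5V :=
  fun x y => SK5half part x y || SK5half part y x.

(* A = {2,3}: v_0,v_1 form one block, v_2,v_3,v_4 the other. *)
Definition partA (i : 'I_5) : bool := (i < 2)%N.
(* B = {1,4}: v_0 alone, v_1,...,v_4 form the other block. *)
Definition partB (i : 'I_5) : bool := (i < 1)%N.

Definition adjA : rel SK5V := SK5adj partA.
Definition adjB : rel SK5V := SK5adj partB.

Definition w_m (R : rcfType) : R := 1 - 2^-1 * Num.sqrt ((9 + Num.sqrt 21) / 5).
Definition w_p (R : rcfType) : R := 1 + 2^-1 * Num.sqrt ((9 + Num.sqrt 21) / 5).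
Definition wh_m (R : rcfType) : R := 1 - 2^-1 * Num.sqrt ((9 - Num.sqrt 21) / 5).
Definition wh_p (R : rcfType) : R := 1 + 2^-1 * Num.sqrt ((9 - Num.sqrt 21) / 5).
Definition z_m (R : rcfType) : R := 1 - Num.sqrt (2 / 5).
Definition z_p (R : rcfType) : R := 1 + Num.sqrt (2 / 5).

(* Spectrum (with algebraic multiplicities) encoded as the characteristic
   polynomial: 0, w-, z-^(4), wh-, 1^(8), wh+, z+^(4), w+, 2. *)
Definition specPoly (R : rcfType) : {poly R} :=
  ('X - 0%:P) * ('X - (w_m R)%:P) * ('X - (z_m R)%:P) ^+ 4 * ('X - (wh_m R)%:P)
  * ('X - 1%:P) ^+ 8
  * ('X - (wh_p R)%:P) * ('X - (z_p R)%:P) ^+ 4 * ('X - (w_p R)%:P) * ('X - 2%:P).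

(* Main.v *)
Require Import Defs.
From HB Require Import structures.
From mathcomp Require Import all_boot all_order all_algebra all_fingroup.
From mathcomp Require Import ring lra.
Set Implicit Arguments. Unset Strict Implicit. Unset Printing Implicit Defensive.
Import Order.TTheory GRing.Theory Num.Theory.
Local Open Scope ring_scope.


Notation O5 k := (@Ordinal 5 k erefl).
Notation E i j := (@exist _ (fun p : 'I_5 * 'I_5 => (p.1 < p.2)%N) (O5 i, O5 j) erefl).

Definition Slist : seq SK5V :=
  [:: mv (E 0 1); mv (E 0 2); mv (E 0 3); mv (E 0 4); mv (E 1 2); mv (E 1 3);
      mv (E 1 4); mv (E 2 3); mv (E 2 4); mv (E 3 4);
      pv (O5 0); pv (O5 1); pv (O5 2); pv (O5 3); pv (O5 4)].
Definition Klist : seq SK5V :=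
  [:: wv (O5 0); wv (O5 1); wv (O5 2); wv (O5 3); wv (O5 4); vb false; vb true].
Definition Vlist := Slist ++ Klist.

Lemma Vlist_uniq : uniq Vlist.
Proof. by vm_compute. Qed.

Lemma Vlist_all (x : SK5V) : x \in Vlist.
Proof.
case: x => [[i|[[i j] h]]|[i|b]].
- by case: i => [[|[|[|[|[|k]]]]] hk].
- move: h; case: i => [[|[|[|[|[|k]]]]] hk]; case: j => [[|[|[|[|[|l]]]]] hl] h //.
- by case: i => [[|[|[|[|[|k]]]]] hk].
- by case: b.
Qed.


Lemma Vlist_perm : perm_eq Vlist (enum SK5V).
Proof.
apply: uniq_perm; first exact: Vlist_uniq; first exact: enum_uniq.
by move=> x; rewrite mem_enum Vlist_all.
Qed.

Lemma card_SK5V : #|SK5V| = 22%N.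
Proof. by rewrite cardT -(perm_size Vlist_perm). Qed.

Lemma card_count (p : pred SK5V) : #|p| = count p Vlist.
Proof.
rewrite (seq.permP Vlist_perm) cardE -size_filter; congr size.
by rewrite /enum_mem filter_predT.
Qed.

Lemma deg_count part v : deg (SK5adj part) v = count (SK5adj part v) Vlist.
Proof.
rewrite /deg /nbhd -card_count; apply: eq_card => u; by rewrite inE.
Qed.


Lemma det_reindex (R : comNzRingType) (T : finType) n (g : 'I_n -> T)
   (e : #|T| = n) (Hg : injective g) (f : T -> T -> R) :
 \det (\matrix_(i < #|T|, j < #|T|) f (enum_val i) (enum_val j)) =
 \det (\matrix_(i < n, j < n) f (g i) (g j)).
Proof.
subst n.
have sinj : injective (fun i => enum_rank (g i)).
  by move=> i j /enum_rank_inj /Hg.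
set A := \matrix_(i, j) _.
have -> : \matrix_(i, j) f (g i) (g j) = row_perm (perm sinj) (col_perm (perm sinj) A).
  by apply/matrixP => i j; rewrite !mxE !permE /= !enum_rankK.
rewrite row_permE col_permE !det_mulmx !det_perm odd_permV.
by rewrite mulrCA -signr_addb addbb mulr1.
Qed.

Lemma det_schur (R : comNzRingType) m n (a : R) (B : 'M[R]_(m, n)) (C : 'M[R]_(n, m)) :
  \det (block_mx a%:M B C a%:M) * a ^+ n = a ^+ m * \det ((a * a)%:M - C *m B).
Proof.
have E : block_mx a%:M B C a%:M *m block_mx 1%:M (- B) 0 a%:M
         = block_mx a%:M 0 C ((a * a)%:M - C *m B).
  rewrite mulmx_block !mulmx1 !mulmx0 !addr0 mul_mx_scalar mul_scalar_mx.
  by rewrite scalerN addNr mulmxN -scalar_mxM addrC.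
have := congr1 determinant E.
by rewrite det_mulmx det_ublock det_lblock !det_scalar expr1n mul1r.
Qed.


Definition x0 : SK5V := vb false.
Definition gV (i : 'I_(15 + 7)) : SK5V := nth x0 Vlist i.

Lemma gV_inj : injective gV.
Proof.
move=> i j; rewrite /gV => /eqP; rewrite nth_uniq ?Vlist_uniq //.
by move/eqP/val_inj.
Qed.

Lemma Slist_uniq : uniq Slist. Proof. by vm_compute. Qed.
Lemma Klist_uniq : uniq Klist. Proof. by vm_compute. Qed.
Lemma KS_disj : all (fun u => u \notin Slist) Klist. Proof. by vm_compute. Qed.

Lemma KSne (i k : nat) : (i < 7)%N -> (k < 15)%N ->
  (nth x0 Klist i == nth x0 Slist k) = false.
Proof.
move=> hi hk; apply/negbTE; apply/eqP => E.
have := allP KS_disj (nth x0 Klist i) (@mem_nth _ x0 Klist i hi).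
by rewrite E mem_nth.
Qed.

Definition Pc (R : nzRingType) (c : SK5V -> SK5V -> R) : 'M[R]_7 :=
  \matrix_(i < 7, j < 7) \sum_(k < 15)
     c (nth x0 Klist i) (nth x0 Slist k) * c (nth x0 Slist k) (nth x0 Klist j).

Lemma charL (R : fieldType) (c : SK5V -> SK5V -> R)
  (cS : forall u v, u \in Slist -> v \in Slist -> c u v = 0)
  (cK : forall u v, u \in Klist -> v \in Klist -> c u v = 0) :
  char_poly (\matrix_(i < #|SK5V|, j < #|SK5V|)
               ((i == j)%:R - c (enum_val i) (enum_val j))) =
  ('X - 1) ^+ 8 * (char_poly (Pc c) \Po (('X - 1) ^+ 2)).
Proof.
set a : {poly R} := 'X - 1.
have anz : a != 0 by rewrite /a -polyC1 monic_neq0 // monicXsubC.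
pose F (u v : SK5V) : {poly R} := 'X *+ (u == v) - ((u == v)%:R - c u v)%:P.
rewrite /char_poly /char_poly_mx.
have -> : 'X%:M - map_mx polyC (\matrix_(i < #|SK5V|, j < #|SK5V|)
               ((i == j)%:R - c (enum_val i) (enum_val j)))
   = \matrix_(i < #|SK5V|, j < #|SK5V|) F (enum_val i) (enum_val j).
  by apply/matrixP => i j; rewrite !mxE /F (inj_eq enum_val_inj).
rewrite (@det_reindex _ _ (15 + 7) gV card_SK5V gV_inj).
set M := \matrix_(i < _, j < _) F (gV i) (gV j).
have gl (i : 'I_15) : gV (lshift 7 i) = nth x0 Slist i.
  by rewrite /gV /Vlist nth_cat /= ltn_ord.
have gr (i : 'I_7) : gV (rshift 15 i) = nth x0 Klist i.
  by rewrite /gV /Vlist nth_cat /= addKn.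
have ul : ulsubmx M = a%:M.
  apply/matrixP => i j; rewrite !mxE !gl /F cS ?mem_nth //.
  rewrite nth_uniq ?Slist_uniq //.
  by rewrite val_eqE; case: (_ == _); rewrite /= ?mulr1n ?mulr0n ?subr0 ?polyC1 ?polyC0 ?subr0.
have dr : drsubmx M = a%:M.
  apply/matrixP => i j; rewrite !mxE !gr /F cK ?mem_nth //.
  rewrite nth_uniq ?Klist_uniq //.
  by rewrite val_eqE; case: (_ == _); rewrite /= ?mulr1n ?mulr0n ?subr0 ?polyC1 ?polyC0 ?subr0.
have CB : dlsubmx M *m ursubmx M = map_mx polyC (Pc c).
  apply/matrixP => i j; rewrite !mxE rmorph_sum; apply: eq_bigr => k _.
  rewrite !mxE gl gr /F.
  by rewrite !gr !KSne // eq_sym KSne //= !mulr0n !sub0r !polyCN !opprK polyCM.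
have H := det_schur a (ursubmx M) (dlsubmx M).
rewrite CB -ul -dr submxK in H.
have D : \det ((a * a)%:M - map_mx polyC (Pc c)) = char_poly (Pc c) \Po (a ^+ 2).
  rewrite /char_poly -det_map_mx; congr determinant.
  apply/matrixP => i j; rewrite !mxE.
  by rewrite raddfB raddfMn /= comp_polyX comp_polyC expr2.
apply: (mulIf (expf_neq0 7 anz)); rewrite H D.
have -> : a ^+ 15 = a ^+ 8 * a ^+ 7 by rewrite -exprD.
by rewrite mulrAC.
Qed.


Definition sumL (R : nzRingType) (T : Type) (h : T -> R) (s : seq T) : R :=
  foldr (fun x acc => h x + acc) 0 s.

Lemma big_sumL (R : nzRingType) (T : Type) (h : T -> R) (s : seq T) :
  \sum_(x <- s) h x = sumL h s.
Proof. by elim: s => [|x s IH]; rewrite ?big_nil ?big_cons ?IH. Qed.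

Lemma big_ord_sumL (R : nzRingType) n (h : nat -> R) :
  \sum_(k < n) h k = sumL h (iota 0 n).
Proof. by rewrite -big_sumL -(big_mkord xpredT) /index_iota subn0. Qed.

Definition mk (R : nzRingType) n (f : nat -> nat -> R) : 'M[R]_n :=
  \matrix_(i < n, j < n) f i j.

Lemma mk_eq (R : nzRingType) n (f g : nat -> nat -> R) :
  all (fun i => all (fun j => f i j == g i j) (iota 0 n)) (iota 0 n) ->
  mk n f = mk n g.
Proof.
move=> /allP H; apply/matrixP => i j; rewrite !mxE.
have hi : (i : nat) \in iota 0 n by rewrite mem_iota add0n ltn_ord.
have hj : (j : nat) \in iota 0 n by rewrite mem_iota add0n ltn_ord.
by move: (H i hi) => /allP /(_ j hj) /eqP.
Qed.

Lemma mulmk (R : nzRingType) n (f g : nat -> nat -> R) :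
  mk n f *m mk n g = mk n (fun i j => sumL (fun k => f i k * g k j) (iota 0 n)).
Proof.
apply/matrixP => i j; rewrite !mxE; under eq_bigr => k _ do rewrite !mxE.
by rewrite (@big_ord_sumL _ n (fun k => f i k * g k j)).
Qed.

Lemma char_sim (R : comNzRingType) n (P Q Qi T : 'M[R]_n) :
  Qi *m Q = 1%:M -> P *m Q = Q *m T -> char_poly P = char_poly T.
Proof.
move=> QiQ PQ.
have ET : T = Qi *m P *m Q by rewrite -mulmxA PQ mulmxA QiQ mul1mx.
rewrite ET /char_poly /char_poly_mx.
have QiQp : map_mx polyC Qi *m map_mx polyC Q = 1%:M by rewrite -map_mxM QiQ map_mx1.
have -> : 'X%:M - map_mx polyC (Qi *m P *m Q) =
   map_mx polyC Qi *m ('X%:M - map_mx polyC P) *m map_mx polyC Q.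
  rewrite mulmxBr mulmxBl !map_mxM mul_mx_scalar -scalemxAl QiQp.
  by rewrite scalemx1.
rewrite !det_mulmx mulrAC -det_mulmx QiQp det1 mul1r //.
Qed.

Lemma char_peel (R : comNzRingType) n (f : nat -> nat -> R) :
  all (fun j => f 0%N j == 0) (iota 1 n) ->
  char_poly (mk n.+1 f) =
  ('X - (f 0%N 0%N)%:P) * char_poly (mk n (fun i j => f i.+1 j.+1)).
Proof.
move=> /allP H; rewrite /char_poly (expand_det_row _ 0) big_ord_recl big1 ?addr0.
  rewrite /cofactor !mxE /= addn0 expr0 mul1r mulr1n; congr (_ * _).
  rewrite row'_col'_char_poly_mx; congr determinant; congr char_poly_mx.
  by apply/matrixP => i j; rewrite !mxE.
move=> j _; rewrite !mxE /=.
have -> : f 0%N (bump 0 j) = 0.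
  by apply/eqP/H; rewrite mem_iota /bump /= add1n ltnS ltn_ord.
by rewrite subr0 mulr0n mul0r.
Qed.

Lemma char_mk2 (R : comNzRingType) (f : nat -> nat -> R) :
  char_poly (mk 2 f) =
  ('X - (f 0%N 0%N)%:P) * ('X - (f 1%N 1%N)%:P) - (f 0%N 1%N * f 1%N 0%N)%:P.
Proof.
rewrite /char_poly (expand_det_row _ 0) !big_ord_recl big_ord0 addr0.
rewrite /cofactor !det_mx11 !mxE /=.
by rewrite /bump /= expr0 expr1 mulr1n mulr0n !sub0r !mul1r mulN1r opprK mulNr polyCM.
Qed.


Definition ent (rows : seq (seq rat)) (i j : nat) : rat := nth 0 (nth [::] rows i) j.

Definition cstd (R : fieldType) part (u v : SK5V) : R :=
  (SK5adj part u v)%:R / (deg (SK5adj part) u)%:R.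
Definition cq part (u v : SK5V) : rat :=
  (SK5adj part u v)%:R / (count (SK5adj part u) Vlist)%:R.
Definition Pf part (i j : nat) : rat :=
  sumL (fun k => cq part (nth x0 Klist i) (nth x0 Slist k) *
                 cq part (nth x0 Slist k) (nth x0 Klist j)) (iota 0 15).

Lemma Pc_cstd part : Pc (cstd rat part) = mk 7 (Pf part).
Proof.
apply/matrixP => i j; rewrite !mxE /Pf -big_ord_sumL.
by apply: eq_bigr => k _; rewrite /cstd /cq !deg_count.
Qed.

Lemma one7 : (1%:M : 'M[rat]_7) = mk 7 (fun i j => (i == j)%:R).
Proof. by apply/matrixP => i j; rewrite !mxE. Qed.

Definition QArows : seq (seq rat) :=
  [:: [:: (-1); 0; 0; (-(2/5)); 1; (-(3/2)); (-(3/5))];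
    [:: 1; 0; 0; 0; 1; (-(3/2)); (-(3/5))];
    [:: 0; (-1); (-1); (-(3/5)); 1; 1; (2/5)];
    [:: 0; 1; 0; 0; 1; 1; (2/5)];
    [:: 0; 0; 1; 0; 1; 1; (2/5)];
    [:: 0; 0; 0; 1; 1; 0; (1/2)];
    [:: 0; 0; 0; 1; 1; 0; (-(3/4))]].

Definition QiArows : seq (seq rat) :=
  [:: [:: (-(7/15)); (8/15); (1/30); (1/30); (1/30); (-(1/10)); (-(1/15))];
    [:: (1/30); (1/30); (-(3/10)); (7/10); (-(3/10)); (-(1/10)); (-(1/15))];
    [:: (1/30); (1/30); (-(3/10)); (-(3/10)); (7/10); (-(1/10)); (-(1/15))];
    [:: (-(1/6)); (-(1/6)); (-(1/6)); (-(1/6)); (-(1/6)); (1/2); (1/3)];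
    [:: (1/6); (1/6); (1/6); (1/6); (1/6); (1/10); (1/15)];
    [:: (-(1/5)); (-(1/5)); (2/15); (2/15); (2/15); (-(8/25)); (8/25)];
    [:: 0; 0; 0; 0; 0; (4/5); (-(4/5))]].

Definition QBrows : seq (seq rat) :=
  [:: [:: 0; 0; 0; (-(1/5)); 1; (-4); (-(8/5))];
    [:: (-1); (-1); (-1); (-(4/5)); 1; 1; (2/5)];
    [:: 1; 0; 0; 0; 1; 1; (2/5)];
    [:: 0; 1; 0; 0; 1; 1; (2/5)];
    [:: 0; 0; 1; 0; 1; 1; (2/5)];
    [:: 0; 0; 0; 1; 1; 0; (1/2)];
    [:: 0; 0; 0; 1; 1; 0; (-2)]].

Definition QiBrows : seq (seq rat) :=
  [:: [:: (1/30); (-(13/60)); (47/60); (-(13/60)); (-(13/60)); (-(2/15)); (-(1/30))];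
    [:: (1/30); (-(13/60)); (-(13/60)); (47/60); (-(13/60)); (-(2/15)); (-(1/30))];
    [:: (1/30); (-(13/60)); (-(13/60)); (-(13/60)); (47/60); (-(2/15)); (-(1/30))];
    [:: (-(1/6)); (-(1/6)); (-(1/6)); (-(1/6)); (-(1/6)); (2/3); (1/6)];
    [:: (1/6); (1/6); (1/6); (1/6); (1/6); (2/15); (1/30)];
    [:: (-(1/5)); (1/20); (1/20); (1/20); (1/20); (-(4/25)); (4/25)];
    [:: 0; 0; 0; 0; 0; (2/5); (-(2/5))]].

Definition Trows : seq (seq rat) :=
  [:: [:: (2/5); 0; 0; 0; 0; 0; 0];
    [:: 0; (2/5); 0; 0; 0; 0; 0];
    [:: 0; 0; (2/5); 0; 0; 0; 0];
    [:: 0; 0; 0; (2/5); 0; 0; 0];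
    [:: 0; 0; 0; 0; 1; 0; 0];
    [:: 0; 0; 0; 0; 0; 0; (-(3/20))];
    [:: 0; 0; 0; 0; 0; 1; (9/10)]].

Definition PArows : seq (seq rat) :=
  [:: [:: (1/2); (1/10); (1/10); (1/10); (1/10); 0; (1/10)];
    [:: (1/10); (1/2); (1/10); (1/10); (1/10); 0; (1/10)];
    [:: (1/10); (1/10); (1/2); (1/10); (1/10); (1/10); 0];
    [:: (1/10); (1/10); (1/10); (1/2); (1/10); (1/10); 0];
    [:: (1/10); (1/10); (1/10); (1/10); (1/2); (1/10); 0];
    [:: 0; 0; (1/6); (1/6); (1/6); (1/2); 0];
    [:: (1/4); (1/4); 0; 0; 0; 0; (1/2)]].

Definition PBrows : seq (seq rat) :=
  [:: [:: (1/2); (1/10); (1/10); (1/10); (1/10); 0; (1/10)];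
    [:: (1/10); (1/2); (1/10); (1/10); (1/10); (1/10); 0];
    [:: (1/10); (1/10); (1/2); (1/10); (1/10); (1/10); 0];
    [:: (1/10); (1/10); (1/10); (1/2); (1/10); (1/10); 0];
    [:: (1/10); (1/10); (1/10); (1/10); (1/2); (1/10); 0];
    [:: 0; (1/8); (1/8); (1/8); (1/8); (1/2); 0];
    [:: (1/2); 0; 0; 0; 0; 0; (1/2)]].


Lemma checkA1 : mk 7 (ent QiArows) *m mk 7 (ent QArows) = 1%:M.
Proof. rewrite mulmk one7; apply: mk_eq. by vm_compute. Qed.
Lemma checkB1 : mk 7 (ent QiBrows) *m mk 7 (ent QBrows) = 1%:M.
Proof. rewrite mulmk one7; apply: mk_eq. by vm_compute. Qed.
Lemma PA_eq : mk 7 (Pf partA) = mk 7 (ent PArows).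
Proof. apply: mk_eq. by vm_compute. Qed.
Lemma PB_eq : mk 7 (Pf partB) = mk 7 (ent PBrows).
Proof. apply: mk_eq. by vm_compute. Qed.
Lemma checkA2 : mk 7 (ent PArows) *m mk 7 (ent QArows) = mk 7 (ent QArows) *m mk 7 (ent Trows).
Proof. rewrite !mulmk; apply: mk_eq. by vm_compute. Qed.
Lemma checkB2 : mk 7 (ent PBrows) *m mk 7 (ent QBrows) = mk 7 (ent QBrows) *m mk 7 (ent Trows).
Proof. rewrite !mulmk; apply: mk_eq. by vm_compute. Qed.

Definition cTgen (K : fieldType) (a o z b c : K) : {poly K} :=
  ('X - a%:P) * (('X - a%:P) * (('X - a%:P) *
  (('X - a%:P) * (('X - o%:P) *
  (('X - z%:P) * ('X - b%:P) - c%:P))))).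
Definition cTg (K : fieldType) : {poly K} :=
  cTgen (2/5) 1 0 (9/10) (-(3/20) * 1).
Definition cT : {poly rat} := cTg rat.

Lemma charT : char_poly (mk 7 (ent Trows)) = cT.
Proof.
do 5 (rewrite char_peel; last by vm_compute).
by rewrite char_mk2.
Qed.

Lemma SS_nadj part u v : u \in Slist -> v \in Slist -> SK5adj part u v = false.
Proof.
have : all (fun u => all (fun v => ~~ SK5adj part u v) Slist) Slist by vm_compute.
by move=> /allP H /H /allP H' /H' /negbTE.
Qed.

Lemma KK_nadj part u v : u \in Klist -> v \in Klist -> SK5adj part u v = false.
Proof.
have : all (fun u => all (fun v => ~~ SK5adj part u v) Klist) Klist by vm_compute.
by move=> /allP H /H /allP H' /H' /negbTE.
Qed.

Lemma char_rat part (Qr Qir Prows : seq (seq rat)) :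
  mk 7 (Pf part) = mk 7 (ent Prows) ->
  mk 7 (ent Qir) *m mk 7 (ent Qr) = 1%:M ->
  mk 7 (ent Prows) *m mk 7 (ent Qr) = mk 7 (ent Qr) *m mk 7 (ent Trows) ->
  char_poly (stdLap rat (SK5adj part)) = ('X - 1) ^+ 8 * (cT \Po ('X - 1) ^+ 2) /\
  char_poly (signlessLap rat (SK5adj part)) = ('X - 1) ^+ 8 * (cT \Po ('X - 1) ^+ 2).
Proof.
move=> HPf HQ HPQ.
have cS u v : u \in Slist -> v \in Slist -> cstd rat part u v = 0.
  by move=> hu hv; rewrite /cstd SS_nadj // mul0r.
have cK u v : u \in Klist -> v \in Klist -> cstd rat part u v = 0.
  by move=> hu hv; rewrite /cstd KK_nadj // mul0r.
have HP : char_poly (Pc (cstd rat part)) = cT.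
  by rewrite Pc_cstd HPf (char_sim HQ HPQ) charT.
split.
  have -> : stdLap rat (SK5adj part) = \matrix_(i < #|SK5V|, j < #|SK5V|)
     ((i == j)%:R - cstd rat part (enum_val i) (enum_val j)) by [].
  by rewrite charL // HP.
have -> : signlessLap rat (SK5adj part) = \matrix_(i < #|SK5V|, j < #|SK5V|)
     ((i == j)%:R - (fun u v => - cstd rat part u v) (enum_val i) (enum_val j)).
  by apply/matrixP => i j; rewrite !mxE opprK.
rewrite (@charL _ (fun u v => - cstd rat part u v)); last 2 first.
- by move=> u v hu hv; rewrite cS ?oppr0.
- by move=> u v hu hv; rewrite cK ?oppr0.
have -> : Pc (fun u v => - cstd rat part u v) = Pc (cstd rat part).
  by apply/matrixP => i j; rewrite !mxE; apply: eq_bigr => k _; rewrite mulrNN.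
by rewrite HP.
Qed.

Lemma charA_rat :
  char_poly (stdLap rat adjA) = ('X - 1) ^+ 8 * (cT \Po ('X - 1) ^+ 2) /\
  char_poly (signlessLap rat adjA) = ('X - 1) ^+ 8 * (cT \Po ('X - 1) ^+ 2).
Proof. exact: (char_rat PA_eq checkA1 checkA2). Qed.

Lemma charB_rat :
  char_poly (stdLap rat adjB) = ('X - 1) ^+ 8 * (cT \Po ('X - 1) ^+ 2) /\
  char_poly (signlessLap rat adjB) = ('X - 1) ^+ 8 * (cT \Po ('X - 1) ^+ 2).
Proof. exact: (char_rat PB_eq checkB1 checkB2). Qed.


Lemma stdLap_map (R : rcfType) (adj : rel SK5V) :
  stdLap R adj = map_mx (@ratr R) (stdLap rat adj).
Proof. by apply/matrixP => i j; rewrite !mxE rmorphB fmorph_div !rmorph_nat. Qed.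

Lemma signlessLap_map (R : rcfType) (adj : rel SK5V) :
  signlessLap R adj = map_mx (@ratr R) (signlessLap rat adj).
Proof. by apply/matrixP => i j; rewrite !mxE rmorphD fmorph_div !rmorph_nat. Qed.

Lemma mXs (F K : fieldType) (f : {rmorphism F -> K}) (c : F) :
  map_poly f ('X - c%:P) = 'X - (f c)%:P.
Proof. by rewrite rmorphB /= map_polyX map_polyC. Qed.

Lemma mapcTgen (F K : fieldType) (f : {rmorphism F -> K}) (a o z b c : F) :
  map_poly f (cTgen a o z b c) = cTgen (f a) (f o) (f z) (f b) (f c).
Proof.
rewrite /cTgen !rmorphM /= !mXs rmorphB /= rmorphM /= !mXs map_polyC //.
Qed.

Lemma mapcTg (F K : fieldType) (f : {rmorphism F -> K}) :
  map_poly f (cTg F) = cTg K.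
Proof.
rewrite /cTg mapcTgen; congr cTgen;
  by rewrite ?rmorphN ?fmorph_div ?rmorphM ?rmorphN ?fmorph_div ?rmorph_nat ?rmorph1 ?rmorph0 //= ?rmorph_nat.
Qed.

Lemma map_final (F K : fieldType) (f : {rmorphism F -> K}) :
  map_poly f (('X - 1) ^+ 8 * (cTg F \Po ('X - 1) ^+ 2)) =
  ('X - 1) ^+ 8 * (cTg K \Po ('X - 1) ^+ 2).
Proof.
by rewrite rmorphM /= map_comp_poly mapcTg !rmorphXn /= rmorphB /= map_polyX rmorph1.
Qed.


Lemma pairX (R : rcfType) (u : R) :
  ('X - (1 - u)%:P) * ('X - (1 + u)%:P) = ('X - 1) ^+ 2 - (u ^+ 2)%:P :> {poly R}.
Proof. ring. Qed.

Lemma final_id (R : rcfType) :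
  ('X - 1) ^+ 8 * (cTg R \Po ('X - 1) ^+ 2) = specPoly R.
Proof.
set Y : {poly R} := ('X - 1) ^+ 2.
rewrite /cTg /cTgen !comp_polyM !comp_polyB !comp_polyM !comp_polyB !comp_polyX !comp_polyC.
have E1 : ('X - 0%:P) * ('X - 2%:P) = Y - 1%:P :> {poly R} by rewrite /Y; ring.
have E2 : ('X - (z_m R)%:P) * ('X - (z_p R)%:P) = Y - (2/5)%:P.
  by rewrite /z_m /z_p pairX sqr_sqrtr //; lra.
set r := Num.sqrt (21 : R).
have r2 : r ^+ 2 = 21 by rewrite sqr_sqrtr.
have r0 : 0 <= r by rewrite sqrtr_ge0.
have r9 : r <= 9 by nra.
set A := 2^-1 * Num.sqrt ((9 + r) / 5).
set B := 2^-1 * Num.sqrt ((9 - r) / 5).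
have A2 : A ^+ 2 = (9 + r) / 20.
  rewrite /A exprMn sqr_sqrtr; last by lra.
  by field.
have B2 : B ^+ 2 = (9 - r) / 20.
  rewrite /B exprMn sqr_sqrtr; last by lra.
  by field.
have E3 : (('X - (w_m R)%:P) * ('X - (w_p R)%:P)) * (('X - (wh_m R)%:P) * ('X - (wh_p R)%:P))
          = (Y - 0%:P) * (Y - (9/10)%:P) - (-(3/20) * 1)%:P.
  rewrite /w_m /w_p /wh_m /wh_p -/r -/A -/B !pairX -/Y A2 B2.
  have -> : (Y - ((9 + r) / 20)%:P) * (Y - ((9 - r) / 20)%:P)
          = Y * Y - (((9 + r) / 20) + ((9 - r) / 20))%:P * Y
            + (((9 + r) / 20) * ((9 - r) / 20))%:P by ring.
  have -> : ((9 + r) / 20) + ((9 - r) / 20) = 9/10 :> R by field.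
  have -> : ((9 + r) / 20) * ((9 - r) / 20) = 3/20 :> R.
    have -> : ((9 + r) / 20) * ((9 - r) / 20) = (81 - r ^+ 2) / 400 :> R by field.
    by rewrite r2; field.
  ring.
have -> : specPoly R = ('X - 1) ^+ 8 * ((('X - 0%:P) * ('X - 2%:P)) *
   ((('X - (z_m R)%:P) * ('X - (z_p R)%:P)) ^+ 4 *
   ((('X - (w_m R)%:P) * ('X - (w_p R)%:P)) * (('X - (wh_m R)%:P) * ('X - (wh_p R)%:P))))).
  rewrite /specPoly; ring.
rewrite E1 E2 E3 -/Y.
ring.
Qed.


Lemma degA_ne4 (v : SK5V) : deg adjA v != 4%N.
Proof.
have H : all (fun v => count (adjA v) Vlist != 4%N) Vlist by vm_compute.
by rewrite /adjA deg_count; apply: (allP H); exact: Vlist_all.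
Qed.

Lemma degB_vb : deg adjB (vb false) = 4%N.
Proof. by rewrite /adjB deg_count; vm_compute. Qed.

Lemma not_iso : ~ isomorphic adjA adjB.
Proof.
case=> f [fbij fadj].
have finj := bij_inj fbij.
case: fbij => g fg gf.
set x := g (vb false).
have E : nbhd adjA x = f @^-1: nbhd adjB (f x).
  by apply/setP => v; rewrite !inE fadj.
have := degA_ne4 x; rewrite /deg E card_preimset // -/(deg adjB (f x)).
by rewrite /x gf degB_vb.
Qed.

Theorem mainTheorem9 (R : rcfType) :
  [/\ #|SK5V| = 22%N,
      ~ isomorphic adjA adjB,
      char_poly (stdLap R adjA) = specPoly R,
      char_poly (stdLap R adjB) = specPoly R
    & char_poly (signlessLap R adjA) = char_poly (signlessLap R adjB)].
Proof.
split.
- exact: card_SK5V.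
- exact: not_iso.
- by rewrite stdLap_map -map_char_poly (proj1 charA_rat) map_final final_id.
- by rewrite stdLap_map -map_char_poly (proj1 charB_rat) map_final final_id.
- by rewrite !signlessLap_map -!map_char_poly (proj2 charA_rat) (proj2 charB_rat).
Qed.
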